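(* The map $\dagger:\Psi\mathfrak D\to\Psi\mathfrak D$, $\bigl(\sum_{m\le M}\sum_{k\le K}C_{km}x^k(d/dx)^m\bigr)^\dagger=\sum_{m\le M}\sum_{k\le K}C_{km}(-d/dx)^m x^k$, is a well-defined involutive antiautomorphism of $\Psi\mathfrak D$.
   Context: $\Psi\mathfrak D$ is the algebra of all formal series $\sum_{m=-\infty}^{M}\sum_{k=-\infty}^{K}C_{km}x^k(d/dx)^m$ with $C_{km}\in\mathbb C$ and integers $M,K$ depending on the series, with multiplication determined by $(d/dx)^m x^k=\sum_{j\ge0}\frac{(m)_j(k)_j}{j!}x^{k-j}(d/dx)^{m-j}$ for $m,k\in\mathbb Z$, $(a)_j=a(a-1)\cdots(a-j+1)$; the series $\sum C_{km}(-d/dx)^mx^k$ is interpreted in $\Psi\mathfrak D$ via this rule. *)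

(* Defs.v *)
From HB Require Import structures.
From mathcomp Require Import all_boot all_order all_algebra.
From mathcomp Require Import boolp classical_sets cardinality fsbigop reals.
From mathcomp Require Export complex.
Set Implicit Arguments. Unset Strict Implicit. Unset Printing Implicit Defensive.
Import Order.TTheory GRing.Theory Num.Theory.
Local Open Scope classical_set_scope.
Local Open Scope ring_scope.

Section PsiD.
Variable F : fieldType.

(* A formal series  sum_{m<=M} sum_{k<=K} C k m x^k (d/dx)^m  is represented by
   its coefficient function C : int -> int -> F  (C k m = coefficient of
   x^k (d/dx)^m). *)
Definition series := int -> int -> F.

Definition isPsiD (C : series) : Prop :=
  exists K M : int, forall k m, C k m != 0 -> (k <= K) && (m <= M).

Definition ffact (a : int) (j : nat) : F := \prod_(i < j) (a%:~R - i%:R).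

(* coefficient (m)_j (k)_j / j! of the rule
   (d/dx)^m x^k = sum_j (m)_j (k)_j / j! x^(k-j) (d/dx)^(m-j) *)
Definition rule_coef (m k : int) (j : nat) : F :=
  ffact m j * ffact k j / (j`!)%:R.

Definition psi_add (C D : series) : series := fun k m => C k m + D k m.
Definition psi_scale (a : F) (C : series) : series := fun k m => a * C k m.
Definition psi_one : series := fun k m => if (k == 0) && (m == 0) then 1 else 0.

(* product: (C_{ab} x^a d^b)(D_{cd} x^c d^d)
     = sum_j C_{ab} D_{cd} (b)_j (c)_j / j!  x^(a+c-j) d^(b+d-j);
   the coefficient of x^k d^m is the (finite, for PsiD elements) sum over
   j >= 0 and a, b, with c = k + j - a, d = m + j - b. *)
Definition psi_mul_term (C D : series) (k m : int) (t : nat * (int * int)) : F :=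
  let j := t.1 in let a := t.2.1 in let b := t.2.2 in
  C a b * D (k + j%:Z - a) (m + j%:Z - b) * rule_coef b (k + j%:Z - a) j.
Definition psi_mul (C D : series) : series :=
  fun k m => \sum_(t \in [set: nat * (int * int)]) psi_mul_term C D k m t.

(* dagger: sum C_{k'm'} (-d/dx)^{m'} x^{k'}, each term expanded by the rule
   (-d/dx)^{m'} x^{k'} = (-1)^{m'} sum_j (m')_j (k')_j/j! x^(k'-j) d^(m'-j).
   The coefficient of x^k d^m collects the terms with k' = k + j, m' = m + j. *)
Definition dag_term (C : series) (k m : int) (j : nat) : F :=
  (-1) ^ (m + j%:Z) * C (k + j%:Z) (m + j%:Z) * rule_coef (m + j%:Z) (k + j%:Z) j.
Definition dag (C : series) : series :=
  fun k m => \sum_(j \in [set: nat]) dag_term C k m j.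

End PsiD.

(* Main.v *)
Require Import Defs.
From HB Require Import structures.
From mathcomp Require Import all_boot all_order all_algebra.
From mathcomp Require Import boolp classical_sets cardinality fsbigop reals.
From mathcomp Require Import complex.
From mathcomp Require Import zify ring.
Set Implicit Arguments. Unset Strict Implicit. Unset Printing Implicit Defensive.
Import Order.TTheory GRing.Theory Num.Theory.
Local Open Scope classical_set_scope.
Local Open Scope ring_scope.

Section FR.
Variable F : numFieldType.
Implicit Types (x y z w a b : F).

Definition fr (x : F) (j : nat) : F := \prod_(i < j) (x - i%:R).

Lemma fr0 x : fr x 0 = 1. Proof. by rewrite /fr big_ord0. Qed.
Lemma frS x j : fr x j.+1 = fr x j * (x - j%:R). Proof. by rewrite /fr big_ord_recr. Qed.
Lemma frSl x j : fr x j.+1 = x * fr (x - 1) j.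
Proof.
rewrite /fr big_ord_recl; congr (_ * _); first by rewrite /= subr0.
apply: eq_bigr => i _.
by rewrite lift0 -addn1 natrD opprD addrAC addrA.
Qed.
Lemma frD x p q : fr x (p + q) = fr x p * fr (x - p%:R) q.
Proof.
elim: q => [|q IH]; first by rewrite addn0 fr0 mulr1.
by rewrite addnS !frS IH natrD opprD addrA mulrA.
Qed.

Lemma factr_neq0 n : (n`!%:R : F) != 0.
Proof. by rewrite pnatr_eq0 -lt0n fact_gt0. Qed.

Lemma binE s p : (p <= s)%N ->
  ('C(s, p)%:R : F) = s`!%:R / (p`!%:R * (s - p)%N`!%:R).
Proof.
move=> le; rewrite -(bin_fact le) !natrM mulfK //.
by rewrite mulf_neq0 // factr_neq0.
Qed.

Lemma pascal_split (g : nat -> nat -> F) s :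
  \sum_(0 <= p < s.+2) 'C(s.+1, p)%:R * g p (s.+1 - p)%N =
  \sum_(0 <= p < s.+1) 'C(s, p)%:R * (g p (s.+1 - p)%N + g p.+1 (s - p)%N).
Proof.
rewrite big_nat_recl // bin0 mul1r subn0.
under eq_bigr => p _ do rewrite binS natrD mulrDl subSS.
rewrite big_split /= addrA.
under [X in _ = X]eq_bigr => p _ do rewrite mulrDr.
rewrite big_split /=; congr (_ + _).
rewrite [in RHS]big_nat_recl // bin0 mul1r subn0; congr (_ + _).
rewrite [in LHS]big_nat_recr //= bin_small // mul0r addr0.
by apply: eq_big_nat => p _; rewrite subSS.
Qed.

Lemma vand a b s :
  \sum_(0 <= p < s.+1) 'C(s, p)%:R * (fr a p * fr b (s - p)%N) = fr (a + b) s.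
Proof.
elim: s => [|s IH]; first by rewrite big_nat1 bin0 !fr0 mul1r mulr1.
rewrite (pascal_split (fun p q => fr a p * fr b q)) frS -IH mulr_suml.
apply: eq_big_nat => p /andP[_ lp]; rewrite ltnS in lp.
rewrite subSn // !frS natrB //; ring.
Qed.

Lemma nvand x z v :
  \sum_(0 <= j < v.+1) 'C(v, j)%:R *
     ((-1) ^+ j * fr z j * fr (x + z - j%:R) (v - j)%N) = fr x v.
Proof.
elim: v x => [|v IH] x; first by rewrite big_nat1 bin0 !fr0 expr0 !mul1r.
rewrite (pascal_split (fun j q => (-1) ^+ j * fr z j * fr (x + z - j%:R) q)).
rewrite frSl -(IH (x - 1)) mulr_sumr.
apply: eq_big_nat => j /andP[_ lj]; rewrite ltnS in lj.
rewrite subSn // frSl frS exprS.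
have -> : x + z - j.+1%:R = x - 1 + z - j%:R by rewrite -addn1 natrD; ring.
have -> : x + z - j%:R - 1 = x - 1 + z - j%:R by ring.
ring.
Qed.

Lemma vandd a b s :
  \sum_(0 <= p < s.+1) (fr a p / p`!%:R) * (fr b (s - p)%N / (s - p)%N`!%:R)
  = fr (a + b) s / s`!%:R.
Proof.
rewrite -(vand a b) mulr_suml; apply: eq_big_nat => p /andP[_ lp].
rewrite ltnS in lp; rewrite binE //.
have h1 := factr_neq0 p; have h2 := factr_neq0 (s - p)%N; have h3 := factr_neq0 s.
by field; rewrite ?h1 ?h2 ?h3 ?mulf_neq0.
Qed.

Lemma nvandd x z v :
  \sum_(0 <= j < v.+1) (-1) ^+ j * (fr z j / j`!%:R) *
      (fr (x + z - j%:R) (v - j)%N / (v - j)%N`!%:R) = fr x v / v`!%:R.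
Proof.
rewrite -(nvand x z) mulr_suml; apply: eq_big_nat => p /andP[_ lp].
rewrite ltnS in lp; rewrite binE //.
have h1 := factr_neq0 p; have h2 := factr_neq0 (v - p)%N; have h3 := factr_neq0 v.
by field; rewrite ?h1 ?h2 ?h3 ?mulf_neq0.
Qed.

Lemma tri_widen n j (G : nat -> F) : (j <= n)%N ->
  \sum_(0 <= t < (n - j)%N.+1) G t =
  \sum_(0 <= t < n.+1) (if (j + t <= n)%N then G t else 0).
Proof.
move=> jn; rewrite (big_nat_widen _ _ _ _ _ (_ : (n - j)%N.+1 <= n.+1)%N);
  last by rewrite ltnS leq_subr.
rewrite big_mkcond; apply: eq_big_nat => t _.
by rewrite ltnS leq_subRL.
Qed.

Lemma tri_exch n (G : nat -> nat -> F) :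
  \sum_(0 <= j < n.+1) \sum_(0 <= t < (n - j)%N.+1) G j t =
  \sum_(0 <= t < n.+1) \sum_(0 <= j < (n - t)%N.+1) G j t.
Proof.
transitivity (\sum_(0 <= j < n.+1) \sum_(0 <= t < n.+1)
                 (if (j + t <= n)%N then G j t else 0)).
  by apply: eq_big_nat => j /andP[_ jn]; rewrite tri_widen.
rewrite exchange_big_nat; apply: eq_big_nat => t /andP[_ tn].
by rewrite tri_widen //; apply: eq_big_nat => j _; rewrite addnC.
Qed.

Definition rr (u v : F) (j : nat) := fr u j * fr v j / j`!%:R.

Lemma keyT x y z w n :
 \sum_(0 <= j < n.+1) (-1) ^+ j * rr (y + w - j%:R) (x + z - j%:R) (n - j)%N * rr y z j
 = \sum_(0 <= s < n.+1) \sum_(0 <= p < s.+1)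
      rr w z p * rr y x (n - s)%N * rr (w - p%:R) (x - (n - s)%N%:R) (s - p)%N.
Proof.
pose S := \sum_(0 <= s < n.+1) fr w s / s`!%:R *
   (fr y (n - s)%N * fr x (n - s)%N / (n - s)%N`!%:R) * fr (x + z - (n - s)%N%:R) s.
transitivity S; last first.
  apply: eq_big_nat => s /andP[_ sn]; rewrite ltnS in sn.
  transitivity (\sum_(0 <= p < s.+1)
     (fr y (n - s)%N * fr x (n - s)%N / (n - s)%N`!%:R) * fr w s *
     ((fr z p / p`!%:R) * (fr (x - (n - s)%N%:R) (s - p)%N / (s - p)%N`!%:R))); last first.
    by apply: eq_big_nat => p /andP[_ ps]; rewrite ltnS in ps;
       rewrite /rr -[in fr w s](subnKC ps) frD; ring.
  rewrite -mulr_sumr vandd.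
  have -> : z + (x - (n - s)%N%:R) = x + z - (n - s)%N%:R by ring.
  ring.
transitivity (\sum_(0 <= j < n.+1) \sum_(0 <= t < (n - j)%N.+1)
   (-1) ^+ j * (fr w t / t`!%:R) * (fr (y - j%:R) (n - j - t)%N / (n - j - t)%N`!%:R)
     * fr (x + z - j%:R) (n - j)%N * fr y j * fr z j / j`!%:R).
  apply: eq_big_nat => j /andP[_ jn]; rewrite ltnS in jn.
  have -> : y + w - j%:R = w + (y - j%:R) by ring.
  have h := factr_neq0 (n - j)%N; have h' := factr_neq0 j.
  transitivity ((fr (w + (y - j%:R)) (n - j)%N / (n - j)%N`!%:R) *
     ((-1) ^+ j * fr (x + z - j%:R) (n - j)%N * fr y j * fr z j / j`!%:R)).
    by rewrite /rr; field; rewrite ?h ?h' ?mulf_neq0.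
  rewrite -(vandd w (y - j%:R)) mulr_suml; apply: eq_big_nat => t _.
  by field; rewrite ?mulf_neq0 ?factr_neq0.
rewrite tri_exch; apply: eq_big_nat => t /andP[_ tn]; rewrite ltnS in tn.
transitivity (\sum_(0 <= j < (n - t)%N.+1)
   (fr w t / t`!%:R * fr y (n - t)%N * fr (x + z - (n - t)%N%:R) t) *
   ((-1) ^+ j * (fr z j / j`!%:R) *
      (fr (x + z - j%:R) (n - t - j)%N / (n - t - j)%N`!%:R))).
  apply: eq_big_nat => j /andP[_ jn]; rewrite ltnS in jn.
  have e1 : (n - j - t = n - t - j)%N by rewrite subnAC.
  have e2 : (n - j = (n - t - j)%N + t)%N.
    by rewrite subnAC subnK // leq_subRL ?(leq_trans jn) ?leq_subr // addnC -leq_subRL.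
  rewrite e1 e2 frD.
  have -> : fr y (n - t)%N = fr y j * fr (y - j%:R) (n - t - j)%N
    by rewrite -frD subnKC.
  have -> : x + z - j%:R - (n - t - j)%N%:R = x + z - (n - t)%N%:R
    by rewrite natrB // ; ring.
  by field; rewrite ?mulf_neq0 ?factr_neq0.
rewrite -mulr_sumr nvandd; ring.
Qed.

End FR.

Section Ser.
Variable F : numFieldType.

Lemma delta_seq (T : eqType) (s : seq T) (e : T) (f : T -> F) : uniq s ->
  \sum_(x <- s) (x == e)%:R * f x = (e \in s)%:R * f e.
Proof.
elim: s => [|y s IH] /=; first by rewrite big_nil mul0r.
case/andP=> ys us; rewrite big_cons IH // in_cons.
case: (eqVneq y e) => [<-|ne] /=.
  by rewrite (negbTE ys) mul1r mul0r addr0.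
by rewrite mul0r add0r.
Qed.

Lemma delta_seq' (T : eqType) (s : seq T) (e : T) (f : T -> F) : uniq s ->
  \sum_(x <- s) (e == x)%:R * f x = (e \in s)%:R * f e.
Proof. by move=> us; under eq_bigr do rewrite eq_sym; apply: delta_seq. Qed.

Definition W (L : nat) : seq int := [seq i%:Z - L%:Z | i <- iota 0 (L + L).+1].

Lemma memW L a : (a \in W L) = (- L%:Z <= a) && (a <= L%:Z).
Proof.
apply/idP/idP.
  by case/mapP => i; rewrite mem_iota => /andP[_ hi] ->; apply/andP; split; lia.
move=> /andP[h1 h2]; apply/mapP; exists (absz (a + L%:Z)); last by lia.
by rewrite mem_iota; apply/andP; split; lia.
Qed.

Lemma uniqW L : uniq (W L).
Proof.
rewrite map_inj_uniq ?iota_uniq // => i j /eqP; rewrite subr_eq subrK => /eqP.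
by case.
Qed.

Lemma sgD (a b : int) : (-1 : F) ^ (a + b) = (-1) ^ a * (-1) ^ b.
Proof. by rewrite expfzDr // oppr_eq0 oner_eq0. Qed.

Lemma dagE (C : series F) k m N :
  (forall j, (N <= j)%N -> C (k + j%:Z) (m + j%:Z) = 0) ->
  dag C k m = \sum_(0 <= j < N) dag_term C k m j.
Proof.
move=> hC; rewrite /dag (fsbigE (iota 0 N)) ?iota_uniq //.
  rewrite /index_iota subn0; apply: eq_bigl => j; exact: in_setT.
move=> j _; rewrite mem_iota add0n -leqNgt => /hC.
by rewrite /dag_term => ->; rewrite mulr0 mul0r.
Qed.

Lemma mulE (C D : series F) k m N L :
  (forall j a b, psi_mul_term C D k m (j, (a, b)) != 0 ->
     [&& (j < N)%N, a \in W L & b \in W L]) ->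
  psi_mul C D k m = \sum_(0 <= j < N) \sum_(a <- W L) \sum_(b <- W L)
                       psi_mul_term C D k m (j, (a, b)).
Proof.
move=> hT; rewrite /psi_mul.
rewrite (fsbigE [seq (j, ab) | j <- iota 0 N, ab <- [seq (a, b) | a <- W L, b <- W L]]).
- rewrite (eq_bigl xpredT); last by move=> t; exact: in_setT.
  rewrite big_allpairs /index_iota subn0; apply: eq_bigr => j _.
  by rewrite big_allpairs.
- rewrite allpairs_uniq ?iota_uniq ?allpairs_uniq ?uniqW //.
    by move=> [? ?] [? ?] _ _ [-> ->].
  by move=> [? ?] [? ?] _ _ [-> ->].
- by [].
- move=> [j [a b]] _ hn; apply/eqP; move: hn; apply: contraNT => /hT /and3P[h1 h2 h3].
  apply: (allpairs_f pair); first by rewrite mem_iota.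
  exact: (allpairs_f pair).
Qed.


Definition Q (C D : series F) L (X : int -> int -> int -> int -> F) :=
  \sum_(al <- W L) \sum_(be <- W L) \sum_(ga <- W L) \sum_(de <- W L)
     C al be * D ga de * X al be ga de.

Lemma Q_sum (I : Type) (s : seq I) C D L (X : I -> int -> int -> int -> int -> F) :
  \sum_(x <- s) Q C D L (X x) =
  Q C D L (fun al be ga de => \sum_(x <- s) X x al be ga de).
Proof.
rewrite /Q exchange_big; apply: eq_bigr => al _.
rewrite exchange_big; apply: eq_bigr => be _.
rewrite exchange_big; apply: eq_bigr => ga _.
rewrite exchange_big; apply: eq_bigr => de _.
by rewrite mulr_sumr.
Qed.

Lemma Q_eq C D L X1 X2 :
  (forall al be ga de, al \in W L -> be \in W L -> ga \in W L -> de \in W L ->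
     C al be != 0 -> D ga de != 0 -> X1 al be ga de = X2 al be ga de) ->
  Q C D L X1 = Q C D L X2.
Proof.
move=> h; rewrite /Q; apply: eq_big_seq => al hal; apply: eq_big_seq => be hbe.
apply: eq_big_seq => ga hga; apply: eq_big_seq => de hde.
have [->|c0] := eqVneq (C al be) 0; first by rewrite !mul0r.
have [->|d0] := eqVneq (D ga de) 0; first by rewrite mulr0 !mul0r.
by rewrite h.
Qed.

Lemma ins4_nested C D L e1 e2 e3 e4 (Y : F) :
  (C e1 e2 * D e3 e4 != 0 ->
     [&& e1 \in W L, e2 \in W L, e3 \in W L & e4 \in W L]) ->
  C e1 e2 * D e3 e4 * Y =
  \sum_(al <- W L) ((al == e1)%:R * \sum_(be <- W L) ((be == e2)%:R *
    \sum_(ga <- W L) ((ga == e3)%:R * \sum_(de <- W L) ((de == e4)%:R *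
      (C al be * D ga de * Y))))).
Proof.
move=> h.
rewrite delta_seq ?uniqW // delta_seq ?uniqW // delta_seq ?uniqW //.
rewrite delta_seq ?uniqW //.
have [H|H] := eqVneq (C e1 e2 * D e3 e4) 0.
  by rewrite H mul0r !mulr0.
by case/and4P: (h H) => -> -> -> ->; rewrite !mul1r.
Qed.

Lemma ins4L C D L e1 e2 e3 e4 (Y : F) :
  (C e1 e2 * D e3 e4 != 0 ->
     [&& e1 \in W L, e2 \in W L, e3 \in W L & e4 \in W L]) ->
  C e1 e2 * D e3 e4 * Y =
  Q C D L (fun al be ga de =>
     (al == e1)%:R * (be == e2)%:R * ((ga == e3)%:R * (de == e4)%:R * Y)).
Proof.
move=> h; rewrite (ins4_nested Y h) /Q; apply: eq_bigr => al _.
rewrite mulr_sumr; apply: eq_bigr => be _.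
rewrite mulr_sumr mulr_sumr; apply: eq_bigr => ga _.
rewrite mulr_sumr mulr_sumr mulr_sumr; apply: eq_bigr => de _.
ring.
Qed.

Lemma ins4R C D L e1 e2 e3 e4 (Y : F) :
  (C e1 e2 * D e3 e4 != 0 ->
     [&& e1 \in W L, e2 \in W L, e3 \in W L & e4 \in W L]) ->
  C e1 e2 * D e3 e4 * Y =
  Q C D L (fun al be ga de =>
     (ga == e3)%:R * (de == e4)%:R * ((al == e1)%:R * (be == e2)%:R * Y)).
Proof.
move=> h; rewrite (ins4_nested Y h) /Q; apply: eq_bigr => al _.
rewrite mulr_sumr; apply: eq_bigr => be _.
rewrite mulr_sumr mulr_sumr; apply: eq_bigr => ga _.
rewrite mulr_sumr mulr_sumr mulr_sumr; apply: eq_bigr => de _.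
ring.
Qed.

Lemma collapse2 (T : eqType) (s : seq T) u v (G : T -> T -> F) : uniq s ->
  \sum_(a <- s) \sum_(b <- s) (u == a)%:R * (v == b)%:R * G a b =
  (u \in s)%:R * (v \in s)%:R * G u v.
Proof.
move=> us.
under eq_bigr => a _ do under eq_bigr => b _ do rewrite -mulrA.
under eq_bigr => a _ do rewrite -mulr_sumr delta_seq' //.
by rewrite delta_seq' // mulrA.
Qed.

Lemma ex22 (I1 I2 J1 J2 : Type) (s1 : seq I1) (s2 : seq I2) (t1 : seq J1)
  (t2 : seq J2) (G : I1 -> I2 -> J1 -> J2 -> F) :
  \sum_(a <- s1) \sum_(b <- s2) \sum_(p <- t1) \sum_(q <- t2) G a b p q =
  \sum_(p <- t1) \sum_(q <- t2) \sum_(a <- s1) \sum_(b <- s2) G a b p q.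
Proof.
under eq_bigr => a _ do rewrite exchange_big.
rewrite exchange_big; apply: eq_bigr => p _.
under eq_bigr => a _ do rewrite exchange_big.
by rewrite exchange_big.
Qed.

Lemma collapse_nat N n u (G : nat -> F) : (n < N)%N ->
  \sum_(0 <= q < N) (n == (u + q)%N)%:R * G q = (u <= n)%N%:R * G (n - u)%N.
Proof.
move=> nN.
transitivity (\sum_(0 <= q < N) (q == (n - u)%N)%:R * ((u <= n)%N%:R * G q)).
  apply: eq_bigr => q _.
  have [h|h] := boolP (u <= n)%N.
    have -> : (n == u + q)%N = (q == n - u)%N by apply/eqP/eqP; lia.
    by rewrite mul1r.
  have -> : (n == u + q)%N = false by apply/eqP; lia.
  by rewrite mul0r mulr0.
rewrite delta_seq ?iota_uniq // mem_index_iota.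
have [h|h] := boolP (u <= n)%N; last by rewrite !mul0r mulr0.
by rewrite (_ : (0 <= n - u < N)%N) ?mul1r //; apply/andP; split; lia.
Qed.

Lemma diag_sum N n (H : nat -> nat -> F) : (n < N)%N ->
  \sum_(0 <= i < N) \sum_(0 <= j < N) (n == (i + j)%N)%:R * H i j =
  \sum_(0 <= j < n.+1) H (n - j)%N j.
Proof.
move=> nN; rewrite exchange_big_nat.
transitivity (\sum_(0 <= j < N) (j <= n)%N%:R * H (n - j)%N j).
  apply: eq_bigr => j _.
  rewrite (eq_bigr (fun i => (n == (j + i)%N)%:R * H i j)); last by move=> i _; rewrite addnC.
  by rewrite (collapse_nat j (fun i => H i j) nN).
rewrite (@big_cat_nat _ _ _ n.+1 0 N) //=.
rewrite [X in _ + X]big1_seq ?addr0; last first.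
  by move=> j /andP[_]; rewrite mem_index_iota => /andP[h _];
     rewrite (_ : (j <= n)%N = false) ?mul0r //; lia.
by apply: eq_big_seq => j; rewrite mem_index_iota => /andP[_ h]; rewrite ltnS in h;
   rewrite h mul1r.
Qed.

Lemma tri_sum N n (h : nat -> nat -> F) : (n < N)%N ->
  \sum_(0 <= j < N) \sum_(0 <= p < N) ((j + p)%N <= n)%N%:R * h j p =
  \sum_(0 <= s < n.+1) \sum_(0 <= p < s.+1) h (s - p)%N p.
Proof.
move=> nN.
have E : forall j p : nat, (((j + p)%N <= n)%N%:R : F) =
     \sum_(0 <= s < n.+1) (s == (j + p)%N)%:R.
  move=> j p; rewrite (eq_bigr (fun s => (s == (j + p)%N)%:R * 1)).
    by rewrite delta_seq ?iota_uniq // mulr1 mem_index_iota.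
  by move=> s _; rewrite mulr1.
transitivity (\sum_(0 <= s < n.+1) \sum_(0 <= j < N) \sum_(0 <= p < N)
                 (s == (j + p)%N)%:R * h j p).
  under eq_bigr => j _ do under eq_bigr => p _ do rewrite E mulr_suml.
  under eq_bigr => j _ do rewrite exchange_big.
  by rewrite exchange_big.
apply: eq_big_nat => s /andP[_ sn]; rewrite diag_sum //.
rewrite ltnS in sn; exact: leq_ltn_trans sn nN.
Qed.

Lemma ind2 (t : nat) (n1 n2 : int) :
  (t%:Z == n1)%:R * (t%:Z == n2)%:R =
  ((n1 == n2) && (0 <= n1))%:R * (absz n1 == t)%:R :> F.
Proof.
case: (t%:Z =P n1) => h1; case: (t%:Z =P n2) => h2; case: (n1 =P n2) => h3;
case: (absz n1 =P t) => h4; case: (boolP (0 <= n1)) => h5 /=;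
rewrite ?mulr1 ?mulr0 ?mul0r ?mul1r //; exfalso; lia.
Qed.

End Ser.

Section Pt.
Variable F : numFieldType.

Lemma intrnat (n : nat) : (n%:Z)%:~R = n%:R :> F. Proof. by []. Qed.

Lemma rcE (u v : int) j : rule_coef F u v j = rr u%:~R v%:~R j.
Proof. by []. Qed.

Definition XL k m N L al be ga de : F :=
 \sum_(0 <= i < N) \sum_(0 <= j < N) \sum_(a <- W L) \sum_(b <- W L)
   (al == a)%:R * (be == b)%:R *
   ((ga == k + i%:Z + j%:Z - a)%:R * (de == m + i%:Z + j%:Z - b)%:R *
     ((-1) ^ (m + i%:Z) * rule_coef F b (k + i%:Z + j%:Z - a) j *
        rule_coef F (m + i%:Z) (k + i%:Z) i)).

Lemma XL_eval k m N L al be ga de : al \in W L -> be \in W L ->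
  (al + ga - k < N%:Z) ->
  XL k m N L al be ga de =
  ((al + ga - k == be + de - m) && (0 <= al + ga - k))%:R *
  \sum_(0 <= j < (absz (al + ga - k)%R).+1)
     ((-1) ^ (m + (absz (al + ga - k)%R - j)%N%:Z) * rule_coef F be ga j *
        rule_coef F (m + (absz (al + ga - k)%R - j)%N%:Z)
                    (k + (absz (al + ga - k)%R - j)%N%:Z) (absz (al + ga - k)%R - j)%N).
Proof.
move=> hal hbe hN; rewrite /XL.
under eq_bigr => i _ do under eq_bigr => j _ do rewrite collapse2 ?uniqW // hal hbe !mul1r.
set n1 := al + ga - k; set n2 := be + de - m.
have E1 : forall i j : nat, (ga == k + i%:Z + j%:Z - al) = ((i + j)%N%:Z == n1).
  by move=> i j; apply/eqP/eqP; rewrite /n1; lia.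
have E2 : forall i j : nat, (de == m + i%:Z + j%:Z - be) = ((i + j)%N%:Z == n2).
  by move=> i j; apply/eqP/eqP; rewrite /n2; lia.
under eq_bigr => i _ do under eq_bigr => j _ do rewrite E1 E2 ind2 -!mulrA.
under eq_bigr => i _ do rewrite -mulr_sumr.
rewrite -mulr_sumr.
have [h|h] := boolP ((n1 == n2) && (0 <= n1)); last by rewrite !mul0r.
rewrite !mul1r.
rewrite diag_sum; last by rewrite /n1 in h hN *; lia.
apply: eq_big_nat => j /andP[_ hj].
have -> : k + (absz n1 - j)%N%:Z + j%:Z - al = ga.
  by rewrite /n1 in h hj *; rewrite ltnS in hj; lia.
rewrite /rule_coef; ring.
Qed.


Definition XR k m N L al be ga de : F :=
 \sum_(0 <= j < N) \sum_(a <- W L) \sum_(b <- W L) \sum_(0 <= p < N) \sum_(0 <= q < N)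
   (ga == a + p%:Z)%:R * (de == b + p%:Z)%:R *
   ((al == k + j%:Z - a + q%:Z)%:R * (be == m + j%:Z - b + q%:Z)%:R *
    ((-1) ^ (b + p%:Z) * rule_coef F (b + p%:Z) (a + p%:Z) p *
     ((-1) ^ (m + j%:Z - b + q%:Z) *
        rule_coef F (m + j%:Z - b + q%:Z) (k + j%:Z - a + q%:Z) q) *
     rule_coef F b (k + j%:Z - a) j)).

Definition Yc (al be ga de : int) (j p q : nat) : F :=
  (-1) ^ be * (-1) ^ de * rule_coef F de ga p * rule_coef F be al q *
  rule_coef F (de - p%:Z) (al - q%:Z) j.

Lemma eqsub (x a p : int) : (x == a + p) = (x - p == a).
Proof. by apply/eqP/eqP; lia. Qed.

Lemma XR_eval k m N L al be ga de :
  - L%:Z <= k - al -> - L%:Z <= m - be -> ga <= L%:Z -> de <= L%:Z ->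
  (al + ga - k < N%:Z) ->
  XR k m N L al be ga de =
  ((al + ga - k == be + de - m) && (0 <= al + ga - k))%:R *
  \sum_(0 <= s < (absz (al + ga - k)%R).+1) \sum_(0 <= p < s.+1)
     Yc al be ga de (s - p)%N p (absz (al + ga - k)%R - s)%N.
Proof.
move=> h1 h2 h3 h4 hN; rewrite /XR.
under eq_bigr => j _ do rewrite ex22.
under eq_bigr => j _ do under eq_bigr => p _ do under eq_bigr => q _ do
  under eq_bigr => a _ do under eq_bigr => b _ do rewrite (eqsub ga) (eqsub de).
under eq_bigr => j _ do under eq_bigr => p _ do under eq_bigr => q _ do
  rewrite collapse2 ?uniqW //.
set n1 := al + ga - k; set n2 := be + de - m; set c := (_ && _)%:R.
transitivity (\sum_(0 <= j < N) \sum_(0 <= p < N) \sum_(0 <= q < N)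
   c * ((absz n1 == ((j + p) + q)%N)%:R * Yc al be ga de j p q)).
  apply: eq_bigr => j _; apply: eq_bigr => p _; apply: eq_bigr => q _.
  have [e1|e1] := eqVneq al (k + j%:Z - (ga - p%:Z) + q%:Z); last first.
    rewrite mul0r !mul0r mulr0.
    rewrite /c; case: (boolP (_ && _)) => hc; last by rewrite !mul0r.
    rewrite (_ : absz n1 == _ = false) ?mul0r ?mulr0 //.
    by apply/eqP; rewrite /n1 /n2 in hc *; case/andP: hc => /eqP hc1 hc2; lia.
  have [e2|e2] := eqVneq be (m + j%:Z - (de - p%:Z) + q%:Z); last first.
    rewrite mulr0 !mul0r mulr0.
    rewrite /c; case: (boolP (_ && _)) => hc; last by rewrite !mul0r.
    rewrite (_ : absz n1 == _ = false) ?mul0r ?mulr0 //.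
    by apply/eqP; rewrite /n1 /n2 in hc *; case/andP: hc => /eqP hc1 hc2; lia.
  have m1 : ga - p%:Z \in W L by rewrite memW; apply/andP; split; lia.
  have m2 : de - p%:Z \in W L by rewrite memW; apply/andP; split; lia.
  rewrite m1 m2 /c.
  rewrite (_ : (n1 == n2) && (0 <= n1)); last by rewrite /n1 /n2; apply/andP; split;
    [apply/eqP|]; lia.
  rewrite (_ : absz n1 == _); last by apply/eqP; rewrite /n1; lia.
  rewrite !mul1r -e1 -e2 !subrK.
  have -> : k + j%:Z - (ga - p%:Z) = al - q%:Z by lia.
  by rewrite /Yc; ring.
under eq_bigr => j _ do under eq_bigr => p _ do rewrite -mulr_sumr.
under eq_bigr => j _ do rewrite -mulr_sumr.
rewrite -mulr_sumr.
have [h|h] := boolP ((n1 == n2) && (0 <= n1)); last by rewrite /c (negbTE h) !mul0r.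
congr (_ * _).
have nN : (absz n1 < N)%N by rewrite /n1 in h hN *; lia.
under eq_bigr => j _ do under eq_bigr => p _ do rewrite (collapse_nat _ _ nN).
rewrite tri_sum //.
apply: eq_big_nat => s /andP[_ hs]; apply: eq_big_nat => p /andP[_ hp].
rewrite ltnS in hs hp.
by rewrite subnK.
Qed.


Lemma sgB (a : int) (j : nat) : (-1 : F) ^ (a - j%:Z) = (-1) ^ a * (-1) ^+ j.
Proof.
have := sgD F (a - j%:Z) j; rewrite subrK => ->.
rewrite -mulrA (_ : (-1 : F) ^ (j%:Z) = (-1) ^+ j) //.
by rewrite -exprD addnn -mul2n exprM sqrrN expr1n expr1n mulr1.
Qed.

Lemma XLR k m N L al be ga de : al \in W L -> be \in W L ->
  - L%:Z <= k - al -> - L%:Z <= m - be -> ga <= L%:Z -> de <= L%:Z ->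
  (al + ga - k < N%:Z) ->
  XL k m N L al be ga de = XR k m N L al be ga de.
Proof.
move=> hal hbe h1 h2 h3 h4 hN.
rewrite XL_eval // XR_eval //.
have [h|h] := boolP (_ && _); last by rewrite !mul0r.
rewrite !mul1r.
set n := absz (al + ga - k)%R.
pose x : F := al%:~R; pose y : F := be%:~R; pose z : F := ga%:~R; pose w : F := de%:~R.
transitivity ((-1) ^ (be + de) * \sum_(0 <= j < n.+1)
   (-1) ^+ j * rr (y + w - j%:R) (x + z - j%:R) (n - j) * rr y z j).
  rewrite mulr_sumr; apply: eq_big_nat => j /andP[_ hj]; rewrite ltnS in hj.
  have -> : m + (n - j)%N%:Z = be + de - j%:Z.
    by rewrite /n in hj *; case/andP: h => /eqP ? ?; lia.
  have -> : k + (n - j)%N%:Z = al + ga - j%:Z.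
    by rewrite /n in hj *; case/andP: h => /eqP ? ?; lia.
  rewrite sgB !rcE !intrB !intrD !intrnat -/x -/y -/z -/w; ring.
rewrite keyT sgD mulr_sumr; apply: eq_big_nat => s _.
rewrite mulr_sumr; apply: eq_big_nat => p _.
rewrite /Yc !rcE !intrB !intrnat -/x -/y -/z -/w; ring.
Qed.

End Pt.

Section Main.
Variable F : numFieldType.

Definition bnd (C : series F) (K M : int) :=
  forall a b, C a b != 0 -> (a <= K) && (b <= M).

Lemma bndP C K M a b : bnd C K M -> C a b != 0 -> a <= K /\ b <= M.
Proof. by move=> h /h /andP. Qed.

Lemma dag_bnd C K M : bnd C K M -> bnd (dag C) K M.
Proof.
move=> h a b; apply: contraR => hn; apply/eqP; rewrite /dag fsbig1 // => j _.
rewrite /dag_term; case: (eqVneq (C (a + j%:Z) (b + j%:Z)) 0) => [->|].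
  by rewrite mulr0 mul0r.
move=> /(bndP h) [h1 h2]; case/negP: hn; apply/andP; split; lia.
Qed.

Lemma mul_bnd C D K1 M1 K2 M2 : bnd C K1 M1 -> bnd D K2 M2 ->
  bnd (psi_mul C D) (K1 + K2) (M1 + M2).
Proof.
move=> hC hD k m; apply: contraR => hn; apply/eqP; rewrite /psi_mul fsbig1 //.
move=> [j [a b]] _; rewrite /psi_mul_term /=.
case: (eqVneq (C a b) 0) => [->|/(bndP hC) [h1 h2]]; first by rewrite !mul0r.
case: (eqVneq (D (k + j%:Z - a) (m + j%:Z - b)) 0) => [->|/(bndP hD) [h3 h4]]; first by rewrite mulr0 mul0r.
case/negP: hn; apply/andP; split; lia.
Qed.

Lemma invol_id (u v : F) n :
  \sum_(0 <= j < n.+1) (-1) ^+ j * rr u v j * rr (u - j%:R) (v - j%:R) (n - j)%N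
  = (n == 0)%N%:R.
Proof.
transitivity (fr u n * \sum_(0 <= j < n.+1) (-1) ^+ j * (fr v j / j`!%:R) *
      (fr (0 + v - j%:R) (n - j)%N / (n - j)`!%:R)).
  rewrite mulr_sumr; apply: eq_big_nat => j /andP[_ hj]; rewrite ltnS in hj.
  rewrite /rr add0r -[in fr u n](subnKC hj) frD.
  by field; rewrite ?mulf_neq0 ?factr_neq0.
rewrite nvandd; case: n => [|n]; first by rewrite !fr0 /= divr1 mulr1.
by rewrite [fr 0 _]frSl !mul0r mulr0.
Qed.

Lemma sg2 (a : int) : (-1 : F) ^ a * (-1) ^ a = 1.
Proof. by rewrite -expfzMl mulrNN mulr1 exp1rz. Qed.

Lemma dag_invol C K M : bnd C K M -> forall k m, dag (dag C) k m = C k m.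
Proof.
move=> hC k m.
pose N := (absz K + absz k).+1.
have C0 : forall i, (N <= i)%N -> C (k + i%:Z) (m + i%:Z) = 0.
  move=> i hi; apply/eqP; apply: contraT => /(bndP hC) [h1 h2]; exfalso; lia.
rewrite (dagE (N := N)); last first.
  move=> i hi; apply/eqP; apply: contraT => /(bndP (dag_bnd hC)) [h1 h2]; exfalso; lia.
transitivity (\sum_(0 <= i < N) \sum_(0 <= j < N) \sum_(0 <= n < N)
   (n == (i + j)%N)%:R * (C (k + n%:Z) (m + n%:Z) *
     ((-1) ^+ j * rule_coef F (m + i%:Z + j%:Z) (k + i%:Z + j%:Z) j *
        rule_coef F (m + i%:Z) (k + i%:Z) i))).
  apply: eq_bigr => i _.
  rewrite /dag_term (dagE (N := N)); last first.
    by move=> j hj; rewrite -!addrA -!PoszD C0 //; lia.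
  rewrite mulr_sumr mulr_suml; apply: eq_bigr => j _.
  rewrite delta_seq ?iota_uniq //.
  rewrite mem_index_iota /=.
  have [hij|hij] := boolP (i + j < N)%N.
    rewrite mul1r PoszD !addrA /dag_term.
    rewrite (sgD F (m + i%:Z) j).
    have -> : (-1 : F) ^ (j%:Z) = (-1) ^+ j by [].
    have E : forall x : F, x = (-1) ^ (m + i%:Z) * (-1) ^ (m + i%:Z) * x by move=> x; rewrite sg2 mul1r.
    by rewrite [RHS]E; ring.
  rewrite mul0r /dag_term.
  by rewrite -!addrA -!PoszD C0 ?mulr0 ?mul0r ?mulr0 ?mul0r // leqNgt.
under eq_bigr => i _ do rewrite exchange_big.
rewrite exchange_big.
under eq_bigr => n _ do under eq_bigr => i _ do under eq_bigr => j _ do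
  rewrite mulrCA.
under eq_bigr => n _ do under eq_bigr => i _ do rewrite -mulr_sumr.
under eq_bigr => n _ do rewrite -mulr_sumr.
transitivity (\sum_(0 <= n < N) C (k + n%:Z) (m + n%:Z) * (n == 0)%N%:R).
  apply: eq_big_nat => n /andP[_ hn]; congr (_ * _).
  rewrite diag_sum //.
  rewrite -(invol_id (m + n%:Z)%:~R (k + n%:Z)%:~R n).
  apply: eq_big_nat => j /andP[_ hj]; rewrite ltnS in hj.
  have -> : m + (n - j)%N%:Z + j%:Z = m + n%:Z by lia.
  have -> : k + (n - j)%N%:Z + j%:Z = k + n%:Z by lia.
  have -> : m + (n - j)%N%:Z = m + n%:Z - j%:Z by lia.
  have -> : k + (n - j)%N%:Z = k + n%:Z - j%:Z by lia.
  by rewrite !rcE !intrB !intrnat; ring.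
rewrite big_nat_recl // eqxx mulr1 !addr0 big1 ?addr0 // => n _.
by rewrite mulr0.
Qed.


Lemma antimul C D K1 M1 K2 M2 : bnd C K1 M1 -> bnd D K2 M2 ->
  forall k m, dag (psi_mul C D) k m = psi_mul (dag D) (dag C) k m.
Proof.
move=> hC hD k m.
pose B := (absz K1 + absz M1 + absz K2 + absz M2 + absz k + absz m)%N.
pose L := B; pose N := (3 * B).+1.
have hCD := mul_bnd hC hD.
have hdC := dag_bnd hC; have hdD := dag_bnd hD.
rewrite (dagE (N := N)); last first.
  move=> j hj; apply/eqP; apply: contraT => /(bndP hCD) [h1 h2]; exfalso; lia.
transitivity (\sum_(0 <= i < N) \sum_(0 <= j < N) \sum_(a <- W L) \sum_(b <- W L)
  Q C D L (fun al be ga de => (al == a)%:R * (be == b)%:R *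
   ((ga == k + i%:Z + j%:Z - a)%:R * (de == m + i%:Z + j%:Z - b)%:R *
     ((-1) ^ (m + i%:Z) * rule_coef F b (k + i%:Z + j%:Z - a) j *
        rule_coef F (m + i%:Z) (k + i%:Z) i)))).
  apply: eq_bigr => i _.
  rewrite /dag_term (mulE (N := N) (L := L)); last first.
    move=> j a b; rewrite /psi_mul_term /=.
    case: (eqVneq (C a b) 0) => [->|/(bndP hC) [ha hb]]; first by rewrite !mul0r eqxx.
    case: (eqVneq (D (k + i%:Z + j%:Z - a) (m + i%:Z + j%:Z - b)) 0) =>
      [->|/(bndP hD) [hd1 hd2]]; first by rewrite mulr0 mul0r eqxx.
    move=> _; rewrite !memW; apply/and3P; split; [lia | apply/andP; split; lia |
      apply/andP; split; lia].
  rewrite mulr_sumr mulr_suml; apply: eq_bigr => j _.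
  rewrite mulr_sumr mulr_suml; apply: eq_big_seq => a ha.
  rewrite mulr_sumr mulr_suml; apply: eq_big_seq => b hb.
  rewrite /psi_mul_term /=.
  transitivity (C a b * D (k + i%:Z + j%:Z - a) (m + i%:Z + j%:Z - b) *
     ((-1) ^ (m + i%:Z) * rule_coef F b (k + i%:Z + j%:Z - a) j *
        rule_coef F (m + i%:Z) (k + i%:Z) i)); first by ring.
  apply: ins4L; rewrite mulf_eq0 negb_or => /andP[/(bndP hC) [h1 h2] /(bndP hD) [h3 h4]].
  move: ha hb; rewrite !memW => /andP[ha1 ha2] /andP[hb1 hb2].
  apply/and4P; split; apply/andP; split; lia.
under eq_bigr => i _ do under eq_bigr => j _ do under eq_bigr => a _ do rewrite Q_sum.
under eq_bigr => i _ do under eq_bigr => j _ do rewrite Q_sum.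
under eq_bigr => i _ do rewrite Q_sum.
rewrite Q_sum.
transitivity (Q C D L (XL F k m N L)); first by [].
rewrite [RHS](mulE (N := N) (L := L)); last first.
  move=> j a b; rewrite /psi_mul_term /=.
  case: (eqVneq (dag D a b) 0) => [->|/(bndP hdD) [ha hb]]; first by rewrite !mul0r eqxx.
  case: (eqVneq (dag C (k + j%:Z - a) (m + j%:Z - b)) 0) =>
    [->|/(bndP hdC) [hd1 hd2]]; first by rewrite mulr0 mul0r eqxx.
  move=> _; rewrite !memW; apply/and3P; split; [lia | apply/andP; split; lia |
    apply/andP; split; lia].
transitivity (\sum_(0 <= j < N) \sum_(a <- W L) \sum_(b <- W L)
   \sum_(0 <= p < N) \sum_(0 <= q < N)
  Q C D L (fun al be ga de =>
   (ga == a + p%:Z)%:R * (de == b + p%:Z)%:R *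
   ((al == k + j%:Z - a + q%:Z)%:R * (be == m + j%:Z - b + q%:Z)%:R *
    ((-1) ^ (b + p%:Z) * rule_coef F (b + p%:Z) (a + p%:Z) p *
     ((-1) ^ (m + j%:Z - b + q%:Z) *
        rule_coef F (m + j%:Z - b + q%:Z) (k + j%:Z - a + q%:Z) q) *
     rule_coef F b (k + j%:Z - a) j)))); last first.
  apply: eq_bigr => j _; apply: eq_big_seq => a ha; apply: eq_big_seq => b hb.
  move: (ha) (hb); rewrite !memW => /andP[ha1 ha2] /andP[hb1 hb2].
  rewrite /psi_mul_term /= (dagE (N := N) (C := D)); last first.
    move=> p hp; apply/eqP; apply: contraT => /(bndP hD) [h1 h2]; exfalso; lia.
  rewrite (dagE (N := N) (C := C)); last first.
    move=> q hq; apply/eqP; apply: contraT => /(bndP hC) [h1 h2]; exfalso; lia.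
  rewrite mulr_suml mulr_suml; apply: eq_bigr => p _.
  rewrite mulr_sumr mulr_suml; apply: eq_bigr => q _.
  rewrite /dag_term.
  transitivity (C (k + j%:Z - a + q%:Z) (m + j%:Z - b + q%:Z) * D (a + p%:Z) (b + p%:Z) *
    ((-1) ^ (b + p%:Z) * rule_coef F (b + p%:Z) (a + p%:Z) p *
     ((-1) ^ (m + j%:Z - b + q%:Z) *
        rule_coef F (m + j%:Z - b + q%:Z) (k + j%:Z - a + q%:Z) q) *
     rule_coef F b (k + j%:Z - a) j)); last by ring.
  symmetry; apply: ins4R.
  rewrite mulf_eq0 negb_or => /andP[/(bndP hC) [h1 h2] /(bndP hD) [h3 h4]].
  apply/and4P; split; rewrite memW; apply/andP; split; lia.
under eq_bigr => j _ do under eq_bigr => a _ do under eq_bigr => b _ do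
  under eq_bigr => p _ do rewrite Q_sum.
under eq_bigr => j _ do under eq_bigr => a _ do under eq_bigr => b _ do rewrite Q_sum.
under eq_bigr => j _ do under eq_bigr => a _ do rewrite Q_sum.
under eq_bigr => j _ do rewrite Q_sum.
rewrite Q_sum.
transitivity (Q C D L (XR F k m N L)); last by [].
apply: Q_eq => al be ga de hal hbe hga hde /(bndP hC) [h1 h2] /(bndP hD) [h3 h4].
move: hal hbe hga hde; rewrite !memW => /andP[? ?] /andP[? ?] /andP[? ?] /andP[? ?].
apply: XLR; rewrite ?memW; try (apply/andP; split); lia.
Qed.

End Main.

Section Fin.
Variable F : numFieldType.

Lemma dag_lin (a : F) C D K1 M1 K2 M2 : bnd C K1 M1 -> bnd D K2 M2 ->
  forall k m, dag (psi_add C (psi_scale a D)) k m =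
              psi_add (dag C) (psi_scale a (dag D)) k m.
Proof.
move=> hC hD k m.
pose N := (absz K1 + absz K2 + absz k).+1.
have C0 : forall j, (N <= j)%N -> C (k + j%:Z) (m + j%:Z) = 0.
  move=> j hj; apply/eqP; apply: contraT => /(bndP hC) [h1 h2]; exfalso; lia.
have D0 : forall j, (N <= j)%N -> D (k + j%:Z) (m + j%:Z) = 0.
  move=> j hj; apply/eqP; apply: contraT => /(bndP hD) [h1 h2]; exfalso; lia.
rewrite /psi_add /psi_scale !(dagE (N := N)) //; last first.
  by move=> j hj; rewrite /psi_add /psi_scale C0 // D0 // mulr0 addr0.
rewrite mulr_sumr -big_split /=; apply: eq_bigr => j _.
rewrite /dag_term /psi_add /psi_scale; ring.
Qed.

Lemma dag_one : dag (psi_one F) = psi_one F.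
Proof.
apply/funext => k; apply/funext => m.
pose N := (absz k).+1.
rewrite (dagE (N := N)); last first.
  move=> j hj; rewrite /psi_one; case: ifP => // /andP[/eqP h _]; exfalso; lia.
transitivity (\sum_(0 <= j < N) (j == 0)%N%:R * psi_one F k m).
  apply: eq_bigr => j _; rewrite /dag_term /psi_one.
  case: (boolP ((k + j%:Z == 0) && (m + j%:Z == 0))) => h.
    case/andP: h => /eqP h1 /eqP h2.
    case: j h1 h2 => [|j] h1 h2.
      rewrite !addr0 in h1 h2; rewrite h1 h2 eqxx /=.
      by rewrite /rule_coef /ffact !big_ord0 fact0 addr0 expr0z invr1 !mulr1.
    have z : ffact F 0 j.+1 = 0.
      rewrite /ffact big_ord_recl; apply/eqP; rewrite mulf_eq0; apply/orP; left.
      by rewrite /= subr_eq0.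
    by rewrite /rule_coef h1 z mulr0 mul0r mulr0 mul0r.
  rewrite mulr0 mul0r.
  case: (j =P 0%N) => [ej|]; last by rewrite mul0r.
  subst j; rewrite !addr0 in h; by rewrite (negbTE h) mulr0.
rewrite delta_seq ?iota_uniq // mem_index_iota /= mul1r.
by [].
Qed.

End Fin.

Theorem lemma2p3 (R : realType) :
  (* well-defined: the defining sums are finite and the result lies in PsiD *)
  (forall C : series R[i], isPsiD C ->
     (forall k m : int, finite_set [set j : nat | dag_term C k m j != 0])
     /\ isPsiD (dag C)) /\
  (* involutive *)
  (forall C : series R[i], isPsiD C -> dag (dag C) = C) /\
  (* C-linear *)
  (forall (a : R[i]) (C D : series R[i]), isPsiD C -> isPsiD D ->
     dag (psi_add C (psi_scale a D)) = psi_add (dag C) (psi_scale a (dag D))) /\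
  (* unital *)
  dag (psi_one R[i]) = psi_one R[i] /\
  (* anti-multiplicative *)
  (forall C D : series R[i], isPsiD C -> isPsiD D ->
     dag (psi_mul C D) = psi_mul (dag D) (dag C)).
Proof.
split.
  move=> C [K [M hC]]; split; last by exists K, M; exact: dag_bnd.
  move=> k m; apply: (sub_finite_set _ (finite_II (absz K + absz k).+1)).
  move=> j /=; rewrite /dag_term; apply: contraNT; rewrite -leqNgt => hj.
  case: (eqVneq (C (k + j%:Z) (m + j%:Z)) 0) => [->|/(bndP hC) [h1 h2]].
    by rewrite mulr0 mul0r.
  exfalso; lia.
split.
  move=> C [K [M hC]]; apply/funext => k; apply/funext => m; exact: dag_invol hC k m.
split.
  move=> a C D [K1 [M1 hC]] [K2 [M2 hD]]; apply/funext => k; apply/funext => m.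
  exact: dag_lin hC hD k m.
split; first exact: dag_one.
move=> C D [K1 [M1 hC]] [K2 [M2 hD]]; apply/funext => k; apply/funext => m.
exact: antimul hC hD k m.
Qed.
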